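(* Let $T\in V$ be a target variable. If $\Upsilon$ is conservative, then the set $cpc(T)$ output by the MIPC procedure on input $D_1,\dots,D_n$ and $T$ contains all parents and children of $T$ in $G$, i.e. $pa(T)\cup ch(T)\subseteq cpc(T)$.
   Context: Let $G=(V,E)$ be a DAG (causal Bayesian network) over a finite set $V$ of random variables with joint distribution $P$ satisfying the Markov condition with respect to $G$; causal sufficiency is assumed. $pa(T)$ and $ch(T)$ are the parents and children of $T$ in $G$. There are $n\ge 1$ intervention experiments; in the $i$-th, the set $\Upsilon_i\subseteq V$ (possibly empty) is manipulated, and $\Upsilon=\{\Upsilon_1,\dots,\Upsilon_n\}$ (unknown to the procedure). The post-intervention DAG is $G_i=(V,E_i)$ with $E_i=\{(a,b)\in E: b\notin\Upsilon_i\}$, with distribution $P_i(V)=\prod_{V_j\notin\Upsilon_i}P(V_j\mid pa(V_j))\prod_{V_j\in\Upsilon_i}P_i(V_j)$, and $D_i$ is a dataset drawn from $P_i$. It is assumed that each $P_i$ is faithful to $G_i$ and that conditional independence tests on $D_i$ are reliable, i.e. ''$X\perp T\mid S$ in $D_i$'' holds exactly when it holds in $P_i$. $\Upsilon$ is conservative if for every $V_j\in\bigcup_i\Upsilon_i$ there exists $i$ with $V_j\notin\Upsilon_i$. The MIPC procedure: Phase 1. Initialize $cpc(T)=\emptyset$, $cmb_i(T)=\emptyset$ for all $i$, $ipc(T)=\emptyset$. For each $V_j\in V\setminus\{T\}$ and each $i$, if $V_j$ and $T$ are (marginally) dependent in $D_i$, add $V_j$ to $cpc(T)$ and to $cmb_i(T)$.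 Phase 2. Process the variables $V_j\in cpc(T)$ one at a time. If there exist a nonempty $S\subseteq ipc(T)$ and an index $k$ with $V_j\in cmb_k(T)$, $S\subseteq cmb_k(T)$ and $T\perp V_j\mid S$ in $D_k$, then remove $V_j$ from every $cmb_i(T)$ and proceed to the next variable. Otherwise add $V_j$ to $ipc(T)$, and then for each $Y\in ipc(T)\setminus\{V_j\}$: if there exist a nonempty $S\subseteq ipc(T)\setminus\{Y\}$ and an index $k$ with $Y\in cmb_k(T)$, $S\subseteq cmb_k(T)$ and $T\perp Y\mid S$ in $D_k$, remove $Y$ from $ipc(T)$ and from every $cmb_h(T)$ containing it. After all variables of $cpc(T)$ have been processed, the procedure sets and outputs $cpc(T)=ipc(T)$. *)

(* Defs.v *)
From HB Require Import structures.
From mathcomp Require Import all_boot all_order all_algebra.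

Set Implicit Arguments.
Unset Strict Implicit.
Unset Printing Implicit Defensive.

Import Order.TTheory GRing.Theory Num.Theory.

(* Variables form a finite type V; each variable v takes
   values in a finite type Dom v.  A DAG is an edge relation G : rel V
   (G a b  means a -> b). *)

Section Graph.
Variable V : finType.

Definition dag (G : rel V) : Prop := forall x y, G x y -> ~~ connect G y x.

Definition pa (G : rel V) (v : V) : {set V} := [set w | G w v].
Definition ch (G : rel V) (v : V) : {set V} := [set w | G v w].

Definition mutilate (G : rel V) (U : {set V}) : rel V :=
  fun a b => G a b && (b \notin U).

Definition adjb (G : rel V) : rel V := fun a b => G a b || G b a.

(* condition on an interior node w of a path with neighbours a, b *)
Definition triple_ok (G : rel V) (S : {set V}) (a w b : V) : bool :=
  if G a w && G b w then [exists z in S, connect G w z] else w \notin S.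

Definition active (G : rel V) (S : {set V}) (x : V) (p : seq V) : bool :=
  let q := x :: p in
  all (fun i => triple_ok G S (nth x q i.-1) (nth x q i) (nth x q i.+1))
      (iota 1 (size p).-1).

Definition dconnected (G : rel V) (S : {set V}) (x y : V) : Prop :=
  exists p : seq V,
    [&& path (adjb G) x p, last x p == y, uniq (x :: p) & active G S x p].

Definition dsep (G : rel V) (A B S : {set V}) : Prop :=
  forall a b, a \in A -> b \in B -> ~ dconnected G S a b.

End Graph.

Local Open Scope ring_scope.
Section Prob.
Variables (R : realFieldType) (V : finType) (Dom : V -> finType).

Definition asg := {dffun forall v : V, Dom v}.

Definition agree (A : {set V}) (x y : asg) : bool := [forall v in A, x v == y v].

Definition marg (P : asg -> R) (A : {set V}) (x : asg) : R :=
  \sum_(y : asg | agree A x y) P y.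

Definition is_distr (P : asg -> R) : Prop :=
  (forall x, 0 <= P x) /\ \sum_(x : asg) P x = 1.

Definition is_distr_on (v : V) (q : Dom v -> R) : Prop :=
  (forall a, 0 <= q a) /\ \sum_(a : Dom v) q a = 1.

Definition cindep (P : asg -> R) (A B S : {set V}) : bool :=
  [forall x : asg, marg P (A :|: B :|: S) x * marg P S x
                   == marg P (A :|: S) x * marg P (B :|: S) x].

Definition markov (G : rel V) (P : asg -> R) : Prop :=
  forall v, cindep P [set v] ([set w | ~~ connect G v w] :\: pa G v) (pa G v).

Definition cond (G : rel V) (P : asg -> R) (v : V) (x : asg) : R :=
  marg P (v |: pa G v) x / marg P (pa G v) x.

(* truncated factorisation: distribution after manipulating U with
   distributions Q v for v in U *)
Definition post_intervention (G : rel V) (P : asg -> R) (U : {set V})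
    (Q : forall v : V, Dom v -> R) : asg -> R :=
  fun x => (\prod_(v | v \notin U) cond G P v x) * \prod_(v in U) Q v (x v).

Definition faithful (G : rel V) (P : asg -> R) : Prop :=
  forall A B S : {set V}, [disjoint A & B] -> [disjoint A & S] ->
    [disjoint B & S] -> (cindep P A B S <-> dsep G A B S).

End Prob.
Local Close Scope ring_scope.

Definition conservative (V : finType) (n : nat) (Ups : 'I_n -> {set V}) : Prop :=
  forall v, (exists i, v \in Ups i) -> exists i, v \notin Ups i.

Section MIPC.
Variables (V : finType) (n : nat).
(* ci i X Y S : result of the CI test "X _||_ Y | S" on dataset D_i *)
Variable ci : 'I_n -> V -> V -> {set V} -> bool.
Variable T : V.

Definition state := ({set V} * {ffun 'I_n -> {set V}})%type.

Definition cmb0 : {ffun 'I_n -> {set V}} :=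
  [ffun i => [set v | (v != T) && ~~ ci i v T set0]].
Definition cpc0 : {set V} := \bigcup_(i < n) cmb0 i.

Definition removable (st : state) (Y : V) (base : {set V}) : bool :=
  [exists k : 'I_n, [exists S : {set V},
     [&& S != set0, S \subset base, Y \in st.2 k, S \subset st.2 k
       & ci k T Y S]]].

Definition drop_var (st : state) (Y : V) : state :=
  (st.1 :\ Y, [ffun h => st.2 h :\ Y]).

Definition inner_step (st : state) (Y : V) : state :=
  if removable st Y (st.1 :\ Y) then drop_var st Y else st.

Definition outer_step (tau : V -> seq V) (st : state) (Vj : V) : state :=
  if removable st Vj st.1 then (st.1, [ffun i => st.2 i :\ Vj])
  else let st1 : state := (Vj |: st.1, st.2) in
       foldl inner_step st1 [seq Y <- tau Vj | Y \in st1.1 :\ Vj].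

(* output cpc(T) = final ipc(T); sigma is the processing order of cpc0 *)
Definition mipc (sigma : seq V) (tau : V -> seq V) : {set V} :=
  (foldl (outer_step tau) ((set0 : {set V}), cmb0) sigma).1.

End MIPC.

(* Main.v *)
Require Import Defs.
From HB Require Import structures.
From mathcomp Require Import all_boot all_order all_algebra.

Set Implicit Arguments.
Section L.
Variable V : finType.
Implicit Types (H : rel V) (S : {set V}).

Lemma active_nil H S x : active H S x [::].
Proof. by []. Qed.

Lemma active1 H S x y : active H S x [:: y].
Proof. by []. Qed.

Lemma active_cons2 H S x y z (p : seq V) :
  active H S x [:: y, z & p] = triple_ok H S x y z && active H S y (z :: p).
Proof.
rewrite /active /=.
rewrite -[2]/(1+1) iotaDl all_map; congr (_ && _).
apply: eq_in_all => i; rewrite mem_iota => /andP[i1 i2] /=.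
rewrite add0n.
case: i i1 i2 => [|i] //= _; rewrite add1n ltnS => ip.
have ip1 : i < size (z :: p) by apply: ltnW.
have ip2 : i < size [:: y, z & p] by apply: ltnW; apply: ltnW.
by rewrite (set_nth_default y x ip2) (set_nth_default y x ip1) (set_nth_default y x ip).
Qed.

Lemma fwd H x y p :
  path (adjb H) x (y :: p) -> active H set0 x (y :: p) -> H x y ->
  connect H x (last y p) /\ H (last x (belast y p)) (last y p).
Proof.
elim: p x y => [|z p IH] x y /=.
  by move=> _ _ Hxy; split=> //; apply: connect1.
case/andP=> _ pa; rewrite active_cons2 => /andP[tr ac] Hxy.
have Hyz : H y z.
  move: pa => /andP[]; rewrite /adjb => /orP[//|Hzy] _.
  by move: tr; rewrite /triple_ok Hxy Hzy /=; case/existsP => w; rewrite in_set0.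
have [c e] := IH y z pa ac Hyz.
by split=> //; apply: connect_trans (connect1 Hxy) c.
Qed.

Lemma bwd H x y p :
  (forall a b, H a b -> ~~ connect H b a) ->
  path (adjb H) x (y :: p) -> active H set0 x (y :: p) ->
  H (last y p) (last x (belast y p)) -> connect H (last y p) x.
Proof.
move=> dagH.
elim: p x y => [|z p IH] x y /=.
  by move=> _ _ Hyx; apply: connect1.
move=> pa0; have pa := pa0; case/andP: pa => axy pa.
rewrite active_cons2 => /andP[tr ac] Hl.
have c := IH y z pa ac Hl.
have Hyx : H y x.
  move: axy; rewrite /adjb => /orP[Hxy|//].
  have ac0 : active H set0 x [:: y, z & p] by rewrite active_cons2 tr ac.
  have [_ e] := @fwd H x y (z :: p) pa0 ac0 Hxy.
  by move: (dagH _ _ e); rewrite /= (connect1 Hl).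
by apply: connect_trans c (connect1 Hyx).
Qed.
End L.

Lemma dconn_adj (V : finType) (H : rel V) S (a b : V) :
  a != b -> adjb H a b -> dconnected H S a b.
Proof.
move=> ab adj; exists [:: b] => /=.
by rewrite adj eqxx inE ab.
Qed.

Lemma sub_conn (V : finType) (G : rel V) (U : {set V}) a b :
  connect (mutilate G U) a b -> connect G a b.
Proof.
apply: connect_sub => x y /andP[Gxy _]; exact: connect1.
Qed.

Theorem theorem13 (R : realFieldType) (V : finType) (Dom : V -> finType)
  (G : rel V) (P : asg Dom -> R) (n : nat) (Ups : 'I_n -> {set V})
  (Q : 'I_n -> forall v : V, Dom v -> R)
  (ci : 'I_n -> V -> V -> {set V} -> bool) (T : V)
  (sigma : seq V) (tau : V -> seq V) :
  dag G ->
  is_distr P ->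
  markov G P ->
  (0 < n)%N ->
  (forall i v, v \in Ups i -> is_distr_on (Q i v)) ->
  (forall i, faithful (mutilate G (Ups i)) (post_intervention G P (Ups i) (Q i))) ->
  (forall i X Y S,
     ci i X Y S = cindep (post_intervention G P (Ups i) (Q i)) [set X] [set Y] S) ->
  conservative Ups ->
  perm_eq sigma (enum (cpc0 ci T)) ->
  (forall v, perm_eq (tau v) (enum V)) ->
  pa G T :|: ch G T \subset mipc ci T sigma tau.
Proof.
move=> dagG _ _ n0 _ faith hci cons sig _.
apply/subsetP => X XpaCh.
have XT : X != T.
  apply/eqP => eXT; move: XpaCh; rewrite eXT !inE orbb => GTT.
  by move: (dagG _ _ GTT); rewrite connect0.
have dagH : forall k a b, mutilate G (Ups k) a b -> ~~ connect (mutilate G (Ups k)) b a.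
  move=> k a b /andP[Gab _]; apply/negP => /sub_conn c.
  by move: (dagG _ _ Gab); rewrite c.
have adj_cmb : forall k, adjb (mutilate G (Ups k)) X T -> X \in cmb0 ci T k.
  move=> k adj; rewrite /cmb0 ffunE inE XT /= hci.
  have d1 : [disjoint [set X] & [set T]] by rewrite disjoints1 inE.
  have d2 : [disjoint [set X] & set0] by rewrite disjoints1 inE.
  have d3 : [disjoint [set T] & set0] by rewrite disjoints1 inE.
  apply/negP => /(faith k _ _ _ d1 d2 d3) ds.
  by apply: (ds X T); rewrite ?inE //; exact: dconn_adj.
have cmb_adj : forall k, X \in cmb0 ci T k -> adjb (mutilate G (Ups k)) X T.
  move=> k; rewrite /cmb0 ffunE inE XT /= => nci.
  apply/negPn/negP => nadj; move/negP: nci; apply.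
  have d1 : [disjoint [set X] & [set T]] by rewrite disjoints1 inE.
  have d2 : [disjoint [set X] & set0] by rewrite disjoints1 inE.
  have d3 : [disjoint [set T] & set0] by rewrite disjoints1 inE.
  rewrite hci; apply/(faith k _ _ _ d1 d2 d3).
  move=> a b; rewrite !inE => /eqP-> /eqP-> [[|y p] /and4P[pp lp up ap]].
    by move: lp; rewrite /= (negbTE XT).
  move: lp => /= /eqP lp.
  move: XpaCh; rewrite !inE => /orP[GXT|GTX].
  - have TU : T \in Ups k.
      apply/negPn/negP => TU; move: nadj; rewrite /adjb /mutilate GXT TU.
      by [].
    move: (pp); rewrite lastI rcons_path => /andP[_].
    rewrite /adjb lp => /orP[/andP[_]|Hl]; first by rewrite TU.
    have := @bwd _ _ _ _ _ (dagH k) pp ap; rewrite lp => /(_ Hl) /sub_conn c.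
    by move: (dagG _ _ GXT); rewrite c.
  - have XU : X \in Ups k.
      apply/negPn/negP => XU; move: nadj; rewrite /adjb /mutilate GTX XU.
      by rewrite orbT.
    move: (pp) => /= /andP[]; rewrite /adjb => /orP[Hxy _|/andP[_]]; last by rewrite XU.
    have [c _] := @fwd _ _ _ _ _ pp ap Hxy; move: c; rewrite lp => /sub_conn c.
    by move: (dagG _ _ GTX); rewrite c.
have F : forall k (S : {set V}), X \in cmb0 ci T k -> S \subset cmb0 ci T k -> X \notin S ->
    ~~ ci k T X S.
  move=> k S Xc Sc XS; rewrite hci; apply/negP.
  have TS : T \notin S.
    apply/negP => /(subsetP Sc); by rewrite /cmb0 ffunE inE eqxx.
  have d1 : [disjoint [set T] & [set X]] by rewrite disjoints1 inE eq_sym.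
  have d2 : [disjoint [set T] & S] by rewrite disjoints1.
  have d3 : [disjoint [set X] & S] by rewrite disjoints1.
  move/(faith k _ _ _ d1 d2 d3) => ds.
  apply: (ds T X); rewrite ?inE //; apply: dconn_adj; first by rewrite eq_sym.
  by rewrite /adjb orbC; exact: cmb_adj.
pose sub (st : state V n) := forall k, st.2 k \subset cmb0 ci T k.
have notrem : forall st (base : {set V}), sub st -> X \notin base -> ~~ removable ci T st X base.
  move=> st base sst Xb; apply/negP => /existsP[k /existsP[S /and5P[_ Sb Xk Sk cik]]].
  have Xc : X \in cmb0 ci T k by exact: (subsetP (sst k)).
  have XS : X \notin S by apply/negP => /(subsetP Sb); rewrite (negbTE Xb).
  by move: (F k S Xc (subset_trans Sk (sst k)) XS); rewrite cik.
have innerOK : forall st Y, sub st ->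
    sub (inner_step ci T st Y) /\ (X \in st.1 -> X \in (inner_step ci T st Y).1).
  move=> st Y sst; rewrite /inner_step; case: ifP => rem; last by [].
  split.
    move=> k; rewrite /drop_var /= ffunE; exact: subset_trans (subD1set _ _) (sst k).
  move=> Xs; rewrite /drop_var /= !inE Xs andbT.
  apply/negP => /eqP eYX; move: rem; rewrite -eYX.
  by move: (notrem st (st.1 :\ X) sst); rewrite !inE eqxx /= => /(_ isT) /negbTE ->.
have foldOK : forall l st, sub st ->
    sub (foldl (inner_step ci T) st l) /\
    (X \in st.1 -> X \in (foldl (inner_step ci T) st l).1).
  elim=> [|Y l IH] st sst //=.
  have [s1 x1] := innerOK st Y sst.
  have [s2 x2] := IH _ s1; split => // Xs; exact/x2/x1.
have outer : forall s st, sub st -> (X \in st.1 \/ X \in s) ->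
    X \in (foldl (outer_step ci T tau) st s).1.
  elim=> [|Vj s IH] st sst /=; first by case.
  move=> hX; apply: IH.
    rewrite /outer_step; case: ifP => rem.
      move=> k /=; rewrite ffunE; exact: subset_trans (subD1set _ _) (sst k).
    by case: (foldOK [seq Y <- tau Vj | Y \in (Vj |: st.1) :\ Vj] (Vj |: st.1, st.2) sst).
  rewrite /outer_step; case: ifP => rem.
    case: hX => [Xs|]; first by left.
    rewrite inE => /orP[/eqP eXV|Xs]; last by right.
    case: (boolP (X \in st.1)) => Xs; first by left.
    by move: (notrem st st.1 sst Xs); rewrite eXV rem.
  have [_ xs] := foldOK [seq Y <- tau Vj | Y \in (Vj |: st.1) :\ Vj] (Vj |: st.1, st.2) sst.
  case: hX => [Xs|]; first by left; apply: xs; rewrite /= inE Xs orbT.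
  rewrite inE => /orP[/eqP eXV|Xs]; last by right.
  by left; apply: xs; rewrite /= !inE eXV eqxx.
apply: outer; first by move=> k /=; exact: subxx.
right; rewrite (perm_mem sig) mem_enum.
apply/bigcupP.
have [i Hi] : exists i, adjb (mutilate G (Ups i)) X T.
  move: XpaCh; rewrite !inE => /orP[GXT|GTX].
  - case: (boolP [exists i, T \in Ups i]) => [/existsP[i Ti]|].
      have [j Tj] := cons T (ex_intro _ i Ti).
      by exists j; rewrite /adjb /mutilate GXT Tj.
    move/existsPn => nT; exists (Ordinal n0).
    by rewrite /adjb /mutilate GXT nT.
  - case: (boolP [exists i, X \in Ups i]) => [/existsP[i Ti]|].
      have [j Tj] := cons X (ex_intro _ i Ti).
      by exists j; rewrite /adjb /mutilate GTX Tj orbT.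
    move/existsPn => nT; exists (Ordinal n0).
    by rewrite /adjb /mutilate GTX nT orbT.
by exists i => //; exact: adj_cmb.
Qed.
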